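(* Assume the standing assumptions in the context. Let $v=(v_1,v_2)$ be the bounded constrained viscosity solution on $[\underline{x},+\infty)$ of the system $$\rho v_j(x)=H(x,y_j,Dv_j(x))+\lambda_j\big(v_{\bar\jmath}(x)-v_j(x)\big),\qquad j=1,2,\ \bar\jmath=3-j,$$ and assume each $v_j$ is concave. Then $v_j$ is $C^1$ on $(\underline{x},+\infty)$. In particular, defining $Dv_j(\underline{x})=\lim_{\epsilon\to0^+}\frac{v_j(\underline{x}+\epsilon)-v_j(\underline{x})}{\epsilon}$, the function $Dv_j$ is uniformly continuous on $[\underline{x},R]$ for every constant $R>\underline{x}$.
   Context: Standing assumptions: $\rho>0$; $-\infty<r<\rho$; $0<y_1<y_2$; $\gamma>1$; $\underline{x}\le0$ with $\rho\underline{x}+y_j>0$ for $j=1,2$; $\lambda_1,\lambda_2\ge0$ constants. Utility $u(c)=\frac{c^{1-\gamma}}{1-\gamma}$; Hamiltonian $H(x,y_j,p)=\sup_{c\ge0}\{u(c)+(rx+y_j-c)p\}$, equal to $(rx+y_j)p+\frac{\gamma}{1-\gamma}p^{1-1/\gamma}$ for $p\ge0$ and $+\infty$ for $p<0$. Viscosity subsolution on $S\subseteq[\underline{x},\infty)$: u.s.c. pair $v$ such that whenever $\varphi$ smooth, $j\in\{1,2\}$, and $v_j-\varphi$ has a local max (relative to $[\underline{x},\infty)$) at $x_0\in S$, then $\rho v_j(x_0)\le H(x_0,y_j,D\varphi(x_0))+\lambda_j(v_{\bar\jmath}(x_0)-v_j(x_0))$. Viscosity supersolution on $S$: l.s.c.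 pair with the reverse inequality at local minima $x_0\in S$. A constrained viscosity solution is a continuous pair that is a viscosity supersolution on $(\underline{x},\infty)$ and a viscosity subsolution on $[\underline{x},\infty)$. *)

(* Defs.v *)
From Stdlib Require Import Reals Lra.
From Coquelicot Require Import Coquelicot.
Open Scope R_scope.

(* p^a for p >= 0 with the convention 0^a = 0 (used only with a = 1 - 1/gamma > 0). *)
Definition powp (p a : R) : R :=
  if Rlt_dec 0 p then Rpower p a else 0.

(* Hamiltonian H(x,y,p) = sup_{c>=0} { u(c) + (r x + y - c) p } with
   u(c) = c^(1-gamma)/(1-gamma): it equals (r x + y) p + gamma/(1-gamma) p^(1-1/gamma)
   for p >= 0 and +infinity for p < 0. *)
Definition Ham (r gamma x y p : R) : Rbar :=
  if Rlt_dec p 0 then p_infty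
  else Finite ((r * x + y) * p + gamma / (1 - gamma) * powp p (1 - 1 / gamma)).

Definition smooth (phi : R -> R) : Prop :=
  forall (n : nat) (x : R), ex_derive (Derive_n phi n) x.

Definition loc_max_rel (xl : R) (w phi : R -> R) (x0 : R) : Prop :=
  exists delta : R, 0 < delta /\
    forall x, xl <= x -> Rabs (x - x0) < delta -> w x - phi x <= w x0 - phi x0.

Definition loc_min_rel (xl : R) (w phi : R -> R) (x0 : R) : Prop :=
  exists delta : R, 0 < delta /\
    forall x, xl <= x -> Rabs (x - x0) < delta -> w x0 - phi x0 <= w x - phi x.

(* Viscosity subsolution inequality for component w = v_j (with wbar = v_{jbar},
   income y = y_j, intensity lam = lambda_j) on the set S. *)
Definition visc_sub_j (rho r gamma xl y lam : R) (S : R -> Prop) (w wbar : R -> R) : Prop :=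
  forall (phi : R -> R) (x0 : R), smooth phi -> S x0 -> loc_max_rel xl w phi x0 ->
    Rbar_le (Finite (rho * w x0))
            (Rbar_plus (Ham r gamma x0 y (Derive phi x0)) (Finite (lam * (wbar x0 - w x0)))).

Definition visc_super_j (rho r gamma xl y lam : R) (S : R -> Prop) (w wbar : R -> R) : Prop :=
  forall (phi : R -> R) (x0 : R), smooth phi -> S x0 -> loc_min_rel xl w phi x0 ->
    Rbar_le (Rbar_plus (Ham r gamma x0 y (Derive phi x0)) (Finite (lam * (wbar x0 - w x0))))
            (Finite (rho * w x0)).

Definition usc_on (xl : R) (w : R -> R) : Prop :=
  forall x0, xl <= x0 -> forall eps, 0 < eps -> exists delta, 0 < delta /\
    forall x, xl <= x -> Rabs (x - x0) < delta -> w x < w x0 + eps.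

Definition lsc_on (xl : R) (w : R -> R) : Prop :=
  forall x0, xl <= x0 -> forall eps, 0 < eps -> exists delta, 0 < delta /\
    forall x, xl <= x -> Rabs (x - x0) < delta -> w x0 - eps < w x.

Definition cont_on (xl : R) (w : R -> R) : Prop :=
  forall x0, xl <= x0 -> forall eps, 0 < eps -> exists delta, 0 < delta /\
    forall x, xl <= x -> Rabs (x - x0) < delta -> Rabs (w x - w x0) < eps.

Definition visc_sub (rho r gamma xl y1 y2 lam1 lam2 : R) (S : R -> Prop) (v1 v2 : R -> R) : Prop :=
  usc_on xl v1 /\ usc_on xl v2 /\
  visc_sub_j rho r gamma xl y1 lam1 S v1 v2 /\ visc_sub_j rho r gamma xl y2 lam2 S v2 v1.

Definition visc_super (rho r gamma xl y1 y2 lam1 lam2 : R) (S : R -> Prop) (v1 v2 : R -> R) : Prop :=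
  lsc_on xl v1 /\ lsc_on xl v2 /\
  visc_super_j rho r gamma xl y1 lam1 S v1 v2 /\ visc_super_j rho r gamma xl y2 lam2 S v2 v1.

Definition constrained_visc_sol (rho r gamma xl y1 y2 lam1 lam2 : R) (v1 v2 : R -> R) : Prop :=
  cont_on xl v1 /\ cont_on xl v2 /\
  visc_super rho r gamma xl y1 y2 lam1 lam2 (fun x => xl < x) v1 v2 /\
  visc_sub rho r gamma xl y1 y2 lam1 lam2 (fun x => xl <= x) v1 v2.

Definition bounded_on (xl : R) (w : R -> R) : Prop :=
  exists M : R, forall x, xl <= x -> Rabs (w x) <= M.

Definition concave_on (xl : R) (w : R -> R) : Prop :=
  forall a b t, xl <= a -> xl <= b -> 0 <= t <= 1 ->
    t * w a + (1 - t) * w b <= w (t * a + (1 - t) * b).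

Definition C1_conclusion (xl : R) (w : R -> R) : Prop :=
  exists d : R -> R,
    (forall x, xl < x -> is_derive w x (d x)) /\
    (forall x, xl < x -> continuous d x) /\
    filterlim (fun e => (w (xl + e) - w xl) / e) (at_right 0) (locally (d xl)) /\
    (forall Rb, xl < Rb -> forall eps, 0 < eps -> exists delta, 0 < delta /\
       forall a b, xl <= a <= Rb -> xl <= b <= Rb -> Rabs (a - b) < delta ->
         Rabs (d a - d b) < eps).

(* Main.v *)
Require Import Defs.
From Stdlib Require Import Reals Lra Classical.
From Coquelicot Require Import Coquelicot.
Open Scope R_scope.

Lemma cont_pt_of_eps (f : R -> R) (x : R) :
  (forall eps, 0 < eps -> exists d, 0 < d /\ forall y, Rabs (y - x) < d -> Rabs (f y - f x) < eps) ->
  continuity_pt f x.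
Proof.
  intros H. apply continuity_pt_locally. intros eps.
  destruct (H eps (cond_pos eps)) as [d [Hd Hy]].
  exists (mkposreal d Hd). intros y Hb. apply Hy. exact Hb.
Qed.

Lemma eps_of_cont_pt (f : R -> R) (x : R) :
  continuity_pt f x ->
  forall eps, 0 < eps -> exists d, 0 < d /\ forall y, Rabs (y - x) < d -> Rabs (f y - f x) < eps.
Proof.
  intros H eps He. apply continuity_pt_locally with (eps := mkposreal eps He) in H.
  destruct H as [d Hd]. exists d. split. apply cond_pos. intros y Hy. apply Hd. exact Hy.
Qed.

Definition quad (a b c : R) (x : R) : R := a + b * x + c * (x * x).

Lemma is_derive_quad a b c x : is_derive (quad a b c) x (b + 2 * c * x).
Proof. unfold quad. auto_derive; auto. ring. Qed.

Lemma Derive_quad a b c x : Derive (quad a b c) x = b + 2 * c * x.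
Proof. apply is_derive_unique. apply is_derive_quad. Qed.

Lemma smooth_quad a b c : smooth (quad a b c).
Proof.
  assert (H : forall n, exists a' b' c', forall x, Derive_n (quad a b c) n x = quad a' b' c' x).
  { induction n as [|n IH].
    - exists a, b, c. intros x. reflexivity.
    - destruct IH as [a' [b' [c' E]]]. exists b', (2 * c'), 0. intros x.
      simpl. rewrite (Derive_ext _ _ x E). rewrite Derive_quad. unfold quad. ring. }
  intros n x. destruct (H n) as [a' [b' [c' E]]].
  apply ex_derive_ext with (f := quad a' b' c').
  intros t; symmetry; apply E.
  eexists. apply is_derive_quad.
Qed.

Lemma div_le_cross X Y d1 d2 : 0 < d1 -> 0 < d2 -> Y * d1 <= X * d2 -> Y / d2 <= X / d1.
Proof.
  intros H1 H2 H.
  assert (E : X / d1 - Y / d2 = (X * d2 - Y * d1) / (d1 * d2)) by (field; lra).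
  assert (0 <= (X * d2 - Y * d1) / (d1 * d2)).
  { apply Rdiv_le_0_compat; [lra| apply Rmult_lt_0_compat; lra]. }
  lra.
Qed.

Definition sl (w : R -> R) a b := (w b - w a) / (b - a).

Lemma concave3 xl w a b c : concave_on xl w -> xl <= a -> a < b -> b < c ->
  (c - b) * w a + (b - a) * w c <= (c - a) * w b.
Proof.
  intros Hc Ha Hab Hbc.
  set (t := (c - b) / (c - a)).
  assert (Ht : 0 <= t <= 1).
  { unfold t; split. apply Rdiv_le_0_compat; lra.
    apply Rmult_le_reg_r with (c - a). lra. unfold Rdiv. rewrite Rmult_assoc, Rinv_l by lra. lra. }
  pose proof (Hc a c t Ha ltac:(lra) Ht) as H.
  assert (Eb : t * a + (1 - t) * c = b) by (unfold t; field; lra).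
  rewrite Eb in H.
  apply Rmult_le_compat_r with (r := c - a) in H; [|lra].
  assert (E2 : (t * w a + (1 - t) * w c) * (c - a) = (c - b) * w a + (b - a) * w c) by (unfold t; field; lra).
  lra.
Qed.

Lemma slope_ab_ac xl w a b c : concave_on xl w -> xl <= a -> a < b -> b < c ->
  sl w a c <= sl w a b.
Proof.
  intros Hc Ha Hab Hbc. pose proof (concave3 xl w a b c Hc Ha Hab Hbc).
  unfold sl. apply div_le_cross; lra.
Qed.

Lemma slope_ac_bc xl w a b c : concave_on xl w -> xl <= a -> a < b -> b < c ->
  sl w b c <= sl w a c.
Proof.
  intros Hc Ha Hab Hbc. pose proof (concave3 xl w a b c Hc Ha Hab Hbc).
  unfold sl. apply div_le_cross; lra.
Qed.

Lemma slope_ab_bc xl w a b c : concave_on xl w -> xl <= a -> a < b -> b < c ->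
  sl w b c <= sl w a b.
Proof.
  intros. eapply Rle_trans. eapply slope_ac_bc; eauto. eapply slope_ab_ac; eauto.
Qed.

Lemma slope_mono xl w a b c d : concave_on xl w -> xl <= a -> a < b -> b <= c -> c < d ->
  sl w c d <= sl w a b.
Proof.
  intros Hc Ha Hab Hbc Hcd. destruct (Req_dec b c) as [E|E].
  - subst c. eapply slope_ab_bc; eauto.
  - eapply Rle_trans. eapply slope_ac_bc with (a := b); eauto; lra.
    eapply Rle_trans. eapply slope_ab_ac with (b := c); eauto; lra.
    eapply slope_ab_bc; eauto; lra.
Qed.

Lemma lub_fin (E : R -> Prop) M e0 : E e0 -> (forall z, E z -> z <= M) ->
  (forall z, E z -> z <= real (Lub_Rbar E)) /\
  (forall b, (forall z, E z -> z <= b) -> real (Lub_Rbar E) <= b).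
Proof.
  intros He HM. destruct (Lub_Rbar_correct E) as [Hub Hl].
  destruct (Lub_Rbar E) as [l| |] eqn:El.
  - split. intros z Hz. exact (Hub z Hz). intros b Hb. apply (Hl (Finite b)). intros z Hz. apply Hb, Hz.
  - exfalso. apply (Hl (Finite M)). intros z Hz. apply HM, Hz.
  - exfalso. exact (Hub e0 He).
Qed.

Lemma glb_fin (E : R -> Prop) M e0 : E e0 -> (forall z, E z -> M <= z) ->
  (forall z, E z -> real (Glb_Rbar E) <= z) /\
  (forall b, (forall z, E z -> b <= z) -> b <= real (Glb_Rbar E)).
Proof.
  intros He HM. destruct (Glb_Rbar_correct E) as [Hub Hl].
  destruct (Glb_Rbar E) as [l| |] eqn:El.
  - split. intros z Hz. exact (Hub z Hz). intros b Hb. apply (Hl (Finite b)). intros z Hz. apply Hb, Hz.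
  - exfalso. exact (Hub e0 He).
  - exfalso. apply (Hl (Finite M)). intros z Hz. apply HM, Hz.
Qed.

Definition RS w x := fun z => exists s, 0 < s /\ z = sl w x (x + s).
Definition Ap w x := real (Lub_Rbar (RS w x)).
Definition LS xl w x := fun z => exists s, 0 < s /\ s <= x - xl /\ z = sl w (x - s) x.
Definition Bm xl w x := real (Glb_Rbar (LS xl w x)).

Section Conc.
Variables (xl : R) (w : R -> R).
Hypothesis Hc : concave_on xl w.

Lemma Ap_props x0 M : xl <= x0 -> (forall s, 0 < s -> sl w x0 (x0 + s) <= M) ->
  (forall s, 0 < s -> sl w x0 (x0 + s) <= Ap w x0) /\
  (forall eta, 0 < eta -> exists d0, 0 < d0 /\ forall s, 0 < s <= d0 -> Ap w x0 - eta < sl w x0 (x0 + s)).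
Proof.
  intros Hx HM.
  assert (HE : RS w x0 (sl w x0 (x0 + 1))) by (exists 1; split; [lra|reflexivity]).
  destruct (lub_fin (RS w x0) M _ HE) as [H1 H2].
  { intros z [s [Hs ->]]. apply HM, Hs. }
  split.
  - intros s Hs. apply H1. exists s; split; auto.
  - intros eta Heta.
    destruct (classic (exists s0, 0 < s0 /\ Ap w x0 - eta < sl w x0 (x0 + s0))) as [[s0 [Hs0 Hlt]]|Hn].
    + exists s0; split; auto. intros s [Hs Hss].
      destruct (Req_dec s s0) as [->|Hne]; auto.
      eapply Rlt_le_trans. exact Hlt. eapply slope_ab_ac; eauto; lra.
    + exfalso. assert (Ap w x0 <= Ap w x0 - eta); [|lra].
      apply H2. intros z [s [Hs ->]]. apply Rnot_lt_le. intros Hl. apply Hn. exists s; auto.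
Qed.

Lemma right_slope_bound x0 s : xl < x0 -> 0 < s -> sl w x0 (x0 + s) <= sl w xl x0.
Proof.
  intros Hx Hs. eapply slope_ab_bc; eauto; lra.
Qed.

Lemma Bm_props x0 : xl < x0 ->
  (forall s, 0 < s -> s <= x0 - xl -> Bm xl w x0 <= sl w (x0 - s) x0) /\
  (forall eta, 0 < eta -> exists d0, 0 < d0 /\ d0 <= x0 - xl /\ forall s, 0 < s <= d0 -> sl w (x0 - s) x0 < Bm xl w x0 + eta) /\
  Ap w x0 <= Bm xl w x0.
Proof.
  intros Hx.
  assert (HE : LS xl w x0 (sl w (x0 - (x0 - xl)) x0)) by (exists (x0 - xl); repeat split; lra).
  destruct (glb_fin (LS xl w x0) (sl w x0 (x0 + 1)) _ HE) as [H1 H2].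
  { intros z [s [Hs [Hs2 ->]]]. eapply slope_ab_bc; eauto; lra. }
  split; [|split].
  - intros s Hs Hs2. apply H1. exists s; repeat split; auto.
  - intros eta Heta.
    destruct (classic (exists s0, 0 < s0 /\ s0 <= x0 - xl /\ sl w (x0 - s0) x0 < Bm xl w x0 + eta)) as [[s0 [Hs0 [Hs0' Hlt]]]|Hn].
    + exists s0; repeat split; auto. intros s [Hs Hss].
      destruct (Req_dec s s0) as [->|Hne]; auto.
      eapply Rle_lt_trans; [|exact Hlt]. eapply slope_ac_bc; eauto; lra.
    + exfalso. assert (Bm xl w x0 + eta <= Bm xl w x0); [|lra].
      apply H2. intros z [s [Hs [Hs2 ->]]]. apply Rnot_lt_le. intros Hl. apply Hn. exists s; auto.
  - assert (HM : forall s, 0 < s -> sl w x0 (x0 + s) <= sl w xl x0) by (intros; apply right_slope_bound; auto).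
    destruct (Ap_props x0 _ ltac:(lra) HM) as [A1 _].
    apply H2. intros z [s [Hs [Hs2 ->]]].
    assert (HE2 : RS w x0 (sl w x0 (x0 + 1))) by (exists 1; split; [lra|reflexivity]).
    destruct (lub_fin (RS w x0) (sl w xl x0) _ HE2) as [_ L2].
    { intros z [s' [Hs' ->]]. apply HM, Hs'. }
    apply L2. intros z [s' [Hs' ->]]. eapply slope_mono; eauto; lra.
Qed.

End Conc.

Lemma cont_quad a b c x : continuity_pt (quad a b c) x.
Proof.
  apply derivable_continuous_pt. exists (b + 2 * c * x).
  apply is_derive_Reals. apply is_derive_quad.
Qed.

Lemma touch (u : R -> R) x0 A D :
  (forall t, continuity_pt u t) -> 0 < D ->
  (forall s, 0 < s <= D -> u (x0 + s) <= u x0 + A * s) ->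
  (forall eta, 0 < eta -> exists d0, 0 < d0 /\ forall s, 0 < s <= d0 -> u x0 + (A - eta) * s <= u (x0 + s)) ->
  forall c eps, 0 < c -> 0 < eps ->
  exists x1 b k d, x0 < x1 < x0 + eps /\ x1 < x0 + D /\ 0 < d /\
    (forall t, Rabs (t - x1) < d -> u x1 - quad 0 b k x1 <= u t - quad 0 b k t) /\
    Rabs (b + 2 * k * x1 - A) < c.
Proof.
  intros Hu HD H1 H2 c eps Hc Heps.
  destruct (H2 (c / 8) ltac:(lra)) as [d0 [Hd0 Hd0']].
  set (dl := Rmin d0 (Rmin eps D / 2)).
  assert (Hdl : 0 < dl /\ dl <= d0 /\ dl <= eps / 2 /\ dl <= D / 2).
  { unfold dl. unfold Rmin. repeat destruct Rle_dec; lra. }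
  set (K := c / dl).
  assert (HK : K * dl = c) by (unfold K; field; lra).
  assert (HKp : 0 < K) by (unfold K; apply Rdiv_lt_0_compat; lra).
  set (p := A + c).
  set (b := p + 2 * K * x0). set (k := - K).
  set (g := fun t => u t - quad 0 b k t).
  assert (Hg : forall s, g (x0 + s) - g x0 = u (x0 + s) - u x0 - p * s + K * s * s).
  { intros s. unfold g, quad, b, k. ring. }
  destruct (continuity_ab_min g x0 (x0 + dl) ltac:(lra)) as [m [Hm Hmr]].
  { intros t _. apply continuity_pt_minus. apply Hu. apply cont_quad. }
  assert (Hmid : g (x0 + dl / 2) - g x0 <= - c * dl / 4).
  { rewrite Hg. pose proof (H1 (dl / 2) ltac:(lra)).
    assert (K * (dl / 2) * (dl / 2) = c * dl / 4) by (rewrite <- HK; field).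
    unfold p in *. lra. }
  assert (Hend : - c * dl / 8 <= g (x0 + dl) - g x0).
  { rewrite Hg. pose proof (Hd0' dl ltac:(lra)).
    assert (K * dl * dl = c * dl) by (rewrite HK; ring).
    unfold p in *. nra. }
  pose proof (Hm (x0 + dl / 2) ltac:(lra)) as Hm1.
  pose proof (Hm x0 ltac:(lra)) as Hm0.
  pose proof (Hm (x0 + dl) ltac:(lra)) as Hm2.
  assert (Hne0 : m <> x0) by (intros ->; nra).
  assert (Hne1 : m <> x0 + dl) by (intros ->; nra).
  exists m, b, k, (Rmin (m - x0) (x0 + dl - m)).
  split; [lra|]. split; [lra|]. split.
  { unfold Rmin; destruct Rle_dec; lra. }
  split.
  - intros t Ht. apply (Hm t).
    revert Ht. unfold Rmin; destruct Rle_dec; intros Ht; apply Rabs_def2 in Ht; lra.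
  - unfold b, k, p. apply Rabs_def1.
    + assert (K * (m - x0) < K * dl) by (apply Rmult_lt_compat_l; lra). nra.
    + assert (0 < K * (m - x0)) by (apply Rmult_lt_0_compat; lra). nra.
Qed.

Lemma Rpower_lt_base x1 x2 e : 0 < x1 -> x1 < x2 -> 0 < e -> Rpower x1 e < Rpower x2 e.
Proof.
  intros H1 H2 He. unfold Rpower. apply exp_increasing.
  apply Rmult_lt_compat_l; auto. apply ln_increasing; auto.
Qed.

Lemma Rpower_gt_base x1 x2 e : 0 < x1 -> x1 < x2 -> e < 0 -> Rpower x2 e < Rpower x1 e.
Proof.
  intros H1 H2 He. unfold Rpower. apply exp_increasing.
  pose proof (ln_increasing x1 x2 H1 H2). nra.
Qed.

Lemma Rpower_pos x e : 0 < Rpower x e.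
Proof. unfold Rpower. apply exp_pos. Qed.

Lemma powp_cont A e : 0 <= A -> 0 < e ->
  forall eps, 0 < eps -> exists d, 0 < d /\ forall q, 0 <= q -> Rabs (q - A) < d ->
    Rabs (powp q e - powp A e) < eps.
Proof.
  intros HA He eps Heps. destruct (Req_dec A 0) as [->|HA0].
  - exists (Rpower eps (1 / e)). split. apply Rpower_pos.
    intros q Hq Hqd. unfold powp. destruct (Rlt_dec 0 0); [lra|].
    destruct (Rlt_dec 0 q) as [Hq0|Hq0].
    + rewrite Rminus_0_r in *. rewrite Rabs_right in * by (try apply Rle_ge; try left; try apply Rpower_pos; lra).
      assert (Rpower q e < Rpower (Rpower eps (1 / e)) e) by (apply Rpower_lt_base; auto).
      rewrite Rpower_mult in H. replace (1 / e * e) with 1 in H by (field; lra).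
      rewrite Rpower_1 in H; auto.
    + rewrite Rminus_0_r, Rabs_R0. auto.
  - assert (HAp : 0 < A) by lra.
    assert (Hc : continuity_pt (fun q => Rpower q e) A).
    { apply derivable_continuous_pt. exists (e * Rpower A (e - 1)). apply derivable_pt_lim_power; auto. }
    destruct (eps_of_cont_pt _ _ Hc eps Heps) as [d [Hd Hy]].
    exists (Rmin d (A / 2)). split. unfold Rmin; destruct Rle_dec; lra.
    intros q Hq Hqd.
    assert (Hqd' : Rabs (q - A) < d /\ Rabs (q - A) < A / 2) by (unfold Rmin in Hqd; destruct Rle_dec; split; lra).
    destruct Hqd' as [Hq1 Hq2]. apply Rabs_def2 in Hq2.
    unfold powp. destruct (Rlt_dec 0 q); [|lra]. destruct (Rlt_dec 0 A); [|lra].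
    apply Hy; auto.
Qed.

Lemma Rpower_plus1 q e : 0 < q -> Rpower q e = q * Rpower q (e - 1).
Proof.
  intros Hq. replace e with (1 + (e - 1)) at 1 by ring. rewrite Rpower_plus, Rpower_1; auto.
Qed.

Lemma powp_strict A B e : 0 <= A -> A < B -> 0 < e < 1 ->
  powp A e + powp B e < 2 * powp ((A + B) / 2) e.
Proof.
  intros HA HAB He. unfold powp.
  destruct (Rlt_dec 0 B); [|lra]. destruct (Rlt_dec 0 ((A + B) / 2)); [|lra].
  destruct (Rlt_dec 0 A) as [HA0|HA0].
  - set (m := (A + B) / 2). set (f' := fun t => e * Rpower t (e - 1)).
    assert (Hd : forall c, A <= c <= B -> derivable_pt_lim (fun t => Rpower t e) c (f' c)).
    { intros c Hc. apply derivable_pt_lim_power. lra. }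
    destruct (MVT_cor2 (fun t => Rpower t e) f' A m ltac:(unfold m; lra)) as [c1 [E1 Hc1]].
    { intros c Hc. apply Hd. unfold m in *; lra. }
    destruct (MVT_cor2 (fun t => Rpower t e) f' m B ltac:(unfold m; lra)) as [c2 [E2 Hc2]].
    { intros c Hc. apply Hd. unfold m in *; lra. }
    assert (Hlt : f' c2 < f' c1).
    { unfold f'. apply Rmult_lt_compat_l; [lra|]. apply Rpower_gt_base; lra. }
    assert (m - A = B - m) by (unfold m; field).
    assert (0 < m - A) by (unfold m; lra).
    simpl in E1, E2. nra.
  - assert (A = 0) by lra. subst A.
    replace ((0 + B) / 2) with (B * / 2) by field.
    rewrite <- Rpower_mult_distr by lra.
    assert (H2 : / 2 < Rpower (/ 2) e).
    { unfold Rpower. rewrite <- (exp_ln (/ 2)) at 1 by lra. apply exp_increasing.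
      assert (ln (/ 2) < 0) by (rewrite <- ln_1; apply ln_increasing; lra). nra. }
    pose proof (Rpower_pos B e). nra.
Qed.

Lemma bound_q m0 kap C e : 0 < m0 -> 0 <= kap -> 0 < e < 1 ->
  exists Qb, forall q, 0 <= q -> m0 * q - kap * powp q e <= C -> q <= Qb.
Proof.
  intros Hm Hk He.
  set (beta := m0 / (2 * (kap + 1))).
  assert (Hb : 0 < beta) by (unfold beta; apply Rdiv_lt_0_compat; lra).
  set (T := Rpower beta (1 / (e - 1))).
  assert (HT : Rpower T (e - 1) = beta).
  { unfold T. rewrite Rpower_mult. replace (1 / (e - 1) * (e - 1)) with 1 by (field; lra). apply Rpower_1; auto. }
  exists (Rmax T (2 * C / m0)). intros q Hq HC.
  destruct (Rle_dec q T) as [HqT|HqT]. { eapply Rle_trans; [exact HqT|apply Rmax_l]. }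
  assert (HT0 : 0 < T) by apply Rpower_pos.
  assert (Hq0 : 0 < q) by lra.
  assert (Hpq : Rpower q (e - 1) <= beta).
  { rewrite <- HT. left. apply Rpower_gt_base; lra. }
  unfold powp in HC. destruct (Rlt_dec 0 q); [|lra].
  rewrite Rpower_plus1 in HC by lra.
  assert (kap * (q * Rpower q (e - 1)) <= kap * (q * beta)).
  { apply Rmult_le_compat_l; auto. apply Rmult_le_compat_l; lra. }
  assert (Hkb : kap * beta <= m0 / 2).
  { unfold beta. apply Rmult_le_reg_r with (2 * (kap + 1)); [lra|].
    unfold Rdiv. field_simplify; [|lra]. nra. }
  eapply Rle_trans; [|apply Rmax_r].
  apply Rmult_le_reg_r with (m0 / 2); [lra|].
  replace (2 * C / m0 * (m0 / 2)) with C by (field; lra). nra.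
Qed.

Lemma Rabs_le_inv x a : Rabs x <= a -> - a <= x <= a.
Proof. unfold Rabs; destruct Rcase_abs; intros; lra. Qed.

Lemma Rmax_lip x y z : Rabs (Rmax x z - Rmax y z) <= Rabs (x - y).
Proof.
  unfold Rmax; repeat destruct Rle_dec; unfold Rabs; repeat destruct Rcase_abs; lra.
Qed.

Lemma wext_cont xl w : cont_on xl w -> forall t, continuity_pt (fun x => w (Rmax x xl)) t.
Proof.
  intros Hc t. apply cont_pt_of_eps. intros eps He.
  assert (Hm : xl <= Rmax t xl) by apply Rmax_r.
  destruct (Hc _ Hm eps He) as [d [Hd Hy]].
  exists d; split; auto. intros y Hyt. apply Hy. apply Rmax_r.
  eapply Rle_lt_trans. apply Rmax_lip. exact Hyt.
Qed.

Section PDE.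
Variables (rho r gamma xl y lam : R) (w wbar : R -> R).
Hypothesis Hgamma : 1 < gamma.
Hypothesis Hcw : cont_on xl w.
Hypothesis Hcwb : cont_on xl wbar.
Hypothesis Hconc : concave_on xl w.
Hypothesis Hsup : visc_super_j rho r gamma xl y lam (fun x => xl < x) w wbar.
Hypothesis Hsub : visc_sub_j rho r gamma xl y lam (fun x => xl <= x) w wbar.

Definition aa := 1 - 1 / gamma.
Definition kk := gamma / (1 - gamma).
Definition F x q := (r * x + y) * q + kk * powp q aa + lam * (wbar x - w x) - rho * w x.

Lemma super_apply x1 a b k : xl < x1 -> loc_min_rel xl w (quad a b k) x1 ->
  0 <= b + 2 * k * x1 /\ F x1 (b + 2 * k * x1) <= 0.
Proof.
  intros Hx Hl. pose proof (Hsup (quad a b k) x1 (smooth_quad a b k) Hx Hl) as H.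
  rewrite Derive_quad in H. unfold Ham in H.
  destruct (Rlt_dec (b + 2 * k * x1) 0) as [Hn|Hn].
  - simpl in H. contradiction.
  - simpl in H. unfold F, kk, aa. split; lra.
Qed.

Lemma sub_apply x0 a b k : xl <= x0 -> loc_max_rel xl w (quad a b k) x0 ->
  0 <= b + 2 * k * x0 -> 0 <= F x0 (b + 2 * k * x0).
Proof.
  intros Hx Hl Hq. pose proof (Hsub (quad a b k) x0 (smooth_quad a b k) Hx Hl) as H.
  rewrite Derive_quad in H. unfold Ham in H.
  destruct (Rlt_dec (b + 2 * k * x0) 0) as [Hn|Hn]; [lra|].
  simpl in H. unfold F, kk, aa. lra.
Qed.

Lemma right_touch x0 M : xl <= x0 -> (forall s, 0 < s -> sl w x0 (x0 + s) <= M) ->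
  forall c eps, 0 < c -> 0 < eps -> exists x1 q1, x0 < x1 < x0 + eps /\
    Rabs (q1 - Ap w x0) < c /\ 0 <= q1 /\ F x1 q1 <= 0.
Proof.
  intros Hx HM c eps Hc Heps.
  destruct (Ap_props xl w Hconc x0 M Hx HM) as [A1 A2].
  set (u := fun x => w (Rmax x xl)).
  assert (Hu : forall x, xl <= x -> u x = w x).
  { intros x H. unfold u. rewrite Rmax_left; auto. }
  destruct (touch u x0 (Ap w x0) 1 (wext_cont xl w Hcw) ltac:(lra)) with (c := c) (eps := eps)
    as [x1 [b [k [d [Hx1 [_ [Hd [Hmin Hq]]]]]]]]; auto.
  - intros s Hs. rewrite !Hu by lra. pose proof (A1 s ltac:(lra)) as H. unfold sl in H.
    replace (x0 + s - x0) with s in H by ring.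
    apply Rmult_le_compat_r with (r := s) in H; [|lra].
    unfold Rdiv in H. rewrite Rmult_assoc, Rinv_l in H by lra. lra.
  - intros eta Heta. destruct (A2 eta Heta) as [d0 [Hd0 H]]. exists d0; split; auto.
    intros s Hs. pose proof (H s Hs) as H'. rewrite !Hu by lra. unfold sl in H'.
    replace (x0 + s - x0) with s in H' by ring.
    apply Rmult_lt_compat_r with (r := s) in H'; [|lra].
    unfold Rdiv in H'. rewrite Rmult_assoc, Rinv_l in H' by lra. lra.
  - assert (Hl : loc_min_rel xl w (quad 0 b k) x1).
    { exists d; split; auto. intros x Hxl Hxd. pose proof (Hmin x Hxd) as H.
      rewrite !Hu in H by lra. exact H. }
    destruct (super_apply x1 0 b k ltac:(lra) Hl) as [Hq0 HF].
    exists x1, (b + 2 * k * x1). repeat split; auto; lra.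
Qed.

Lemma left_touch x0 : xl < x0 ->
  forall c eps, 0 < c -> 0 < eps -> exists x1 q1, x0 - eps < x1 < x0 /\ xl < x1 /\
    Rabs (q1 - Bm xl w x0) < c /\ 0 <= q1 /\ F x1 q1 <= 0.
Proof.
  intros Hx c eps Hc Heps.
  destruct (Bm_props xl w Hconc x0 Hx) as [B1 [B2 _]].
  set (u := fun t => w (Rmax (2 * x0 - t) xl)).
  assert (Hu : forall t, 2 * x0 - t >= xl -> u t = w (2 * x0 - t)).
  { intros t H. unfold u. rewrite Rmax_left; auto; lra. }
  assert (Hcu : forall t, continuity_pt u t).
  { intros t. unfold u.
    apply (continuity_pt_comp (fun t => 2 * x0 - t) (fun x => w (Rmax x xl))).
    apply derivable_continuous_pt. reg. apply wext_cont; auto. }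
  destruct (touch u x0 (- Bm xl w x0) (x0 - xl) Hcu ltac:(lra)) with (c := c) (eps := eps)
    as [x1 [b [k [d [Hx1 [HxD [Hd [Hmin Hq]]]]]]]]; auto.
  - intros s Hs. rewrite !Hu by lra. pose proof (B1 s ltac:(lra) ltac:(lra)) as H. unfold sl in H.
    replace (x0 - (x0 - s)) with s in H by ring.
    replace (2 * x0 - (x0 + s)) with (x0 - s) by ring.
    replace (2 * x0 - x0) with x0 by ring.
    apply Rmult_le_compat_r with (r := s) in H; [|lra].
    unfold Rdiv in H. rewrite Rmult_assoc, Rinv_l in H by lra. lra.
  - intros eta Heta. destruct (B2 eta Heta) as [d0 [Hd0 [Hd0' H]]]. exists d0; split; auto.
    intros s Hs. pose proof (H s Hs) as H'. rewrite !Hu by lra. unfold sl in H'.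
    replace (x0 - (x0 - s)) with s in H' by ring.
    replace (2 * x0 - (x0 + s)) with (x0 - s) by ring.
    replace (2 * x0 - x0) with x0 by ring.
    apply Rmult_lt_compat_r with (r := s) in H'; [|lra].
    unfold Rdiv in H'. rewrite Rmult_assoc, Rinv_l in H' by lra. lra.
  - set (a' := 2 * b * x0 + 4 * k * x0 * x0). set (b' := - (b + 4 * k * x0)).
    assert (Eq : forall x, quad a' b' k x = quad 0 b k (2 * x0 - x)).
    { intros x. unfold quad, a', b'. ring. }
    assert (Hl : loc_min_rel xl w (quad a' b' k) (2 * x0 - x1)).
    { exists d; split; auto. intros x Hxl Hxd. 
      pose proof (Hmin (2 * x0 - x) ltac:(replace (2 * x0 - x - x1) with (- (x - (2 * x0 - x1))) by ring; rewrite Rabs_Ropp; exact Hxd)) as H.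
      rewrite !Hu in H by lra. rewrite !Eq.
      replace (2 * x0 - (2 * x0 - x)) with x in H by ring. replace (2 * x0 - (2 * x0 - x1)) with x1 by ring. exact H. }
    destruct (super_apply (2 * x0 - x1) a' b' k ltac:(lra) Hl) as [Hq0 HF].
    exists (2 * x0 - x1), (b' + 2 * k * (2 * x0 - x1)). repeat split; auto; try lra.
    replace (b' + 2 * k * (2 * x0 - x1) - Bm xl w x0) with (- (b + 2 * k * x1 - - Bm xl w x0)) by (unfold b'; ring).
    rewrite Rabs_Ropp. exact Hq.
Qed.


Lemma aa_bounds : 0 < aa < 1.
Proof.
  unfold aa. assert (0 < 1 / gamma < 1).
  { split. apply Rdiv_lt_0_compat; lra. apply Rmult_lt_reg_r with gamma; [lra|].
    unfold Rdiv. rewrite Rmult_1_l, Rinv_l by lra. lra. }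
  lra.
Qed.

Lemma kk_neg : kk < 0.
Proof.
  unfold kk. unfold Rdiv. apply Rmult_pos_neg; [lra|]. apply Rinv_lt_0_compat. lra.
Qed.

Lemma sl_le_mul a b M : a < b -> sl w a b <= M -> w b - w a <= M * (b - a).
Proof.
  intros Hab H. unfold sl in H. apply Rmult_le_compat_r with (r := b - a) in H; [|lra].
  unfold Rdiv in H. rewrite Rmult_assoc, Rinv_l in H by lra. lra.
Qed.

Lemma sl_ge_mul a b M : a < b -> M <= sl w a b -> M * (b - a) <= w b - w a.
Proof.
  intros Hab H. unfold sl in H. apply Rmult_le_compat_r with (r := b - a) in H; [|lra].
  unfold Rdiv in H. rewrite Rmult_assoc, Rinv_l in H by lra. lra.
Qed.

Lemma sl_lt_mul a b M : a < b -> sl w a b < M -> w b - w a < M * (b - a).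
Proof.
  intros Hab H. unfold sl in H. apply Rmult_lt_compat_r with (r := b - a) in H; [|lra].
  unfold Rdiv in H. rewrite Rmult_assoc, Rinv_l in H by lra. lra.
Qed.

Lemma sl_gt_mul a b M : a < b -> M < sl w a b -> M * (b - a) < w b - w a.
Proof.
  intros Hab H. unfold sl in H. apply Rmult_lt_compat_r with (r := b - a) in H; [|lra].
  unfold Rdiv in H. rewrite Rmult_assoc, Rinv_l in H by lra. lra.
Qed.

Lemma cont_F x0 A : xl <= x0 -> 0 <= A ->
  forall eps, 0 < eps -> exists c, 0 < c /\ forall x q, xl <= x -> Rabs (x - x0) < c ->
    0 <= q -> Rabs (q - A) < c -> Rabs (F x q - F x0 A) < eps.
Proof.
  intros Hx HA eps Heps.
  pose proof aa_bounds as Haa.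
  set (L0 := r * x0 + y).
  set (e1 := eps / (3 * (Rabs kk + 1))).
  assert (He1 : 0 < e1) by (unfold e1; apply Rdiv_lt_0_compat; [lra|]; pose proof (Rabs_pos kk); lra).
  assert (He1' : (Rabs kk + 1) * e1 = eps / 3) by (unfold e1; field; pose proof (Rabs_pos kk); lra).
  destruct (powp_cont A aa HA (proj1 Haa) e1 He1) as [dp [Hdp Hp]].
  set (e2 := eps / (3 * (2 * Rabs lam + Rabs rho + 1))).
  assert (He2 : 0 < e2) by (unfold e2; apply Rdiv_lt_0_compat; [lra|]; pose proof (Rabs_pos lam); pose proof (Rabs_pos rho); lra).
  assert (He2' : (2 * Rabs lam + Rabs rho + 1) * e2 = eps / 3) by (unfold e2; field; pose proof (Rabs_pos lam); pose proof (Rabs_pos rho); lra).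
  destruct (Hcw x0 Hx e2 He2) as [dw [Hdw Hw]].
  destruct (Hcwb x0 Hx e2 He2) as [dwb [Hdwb Hwb]].
  set (K3 := Rabs r * (Rabs A + 1) + Rabs L0 + 1).
  assert (HK3 : 0 < K3) by (unfold K3; pose proof (Rabs_pos r); pose proof (Rabs_pos A); pose proof (Rabs_pos L0); nra).
  set (c0 := eps / (3 * K3)).
  assert (Hc0 : 0 < c0) by (unfold c0; apply Rdiv_lt_0_compat; lra).
  assert (Hc0' : K3 * c0 = eps / 3) by (unfold c0; field; lra).
  exists (Rmin (Rmin 1 c0) (Rmin dp (Rmin dw dwb))). split.
  { unfold Rmin; repeat destruct Rle_dec; lra. }
  intros x q Hxl Hxc Hq Hqc.
  assert (Hb : Rabs (x - x0) < 1 /\ Rabs (x - x0) < c0 /\ Rabs (x - x0) < dw /\ Rabs (x - x0) < dwb /\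
               Rabs (q - A) < 1 /\ Rabs (q - A) < c0 /\ Rabs (q - A) < dp).
  { revert Hxc Hqc. unfold Rmin; repeat destruct Rle_dec; intros; repeat split; lra. }
  destruct Hb as [B1 [B2 [B3 [B4 [B5 [B6 B7]]]]]].
  pose proof (Hp q Hq B7) as P1.
  pose proof (Hw x Hxl B3) as P2. pose proof (Hwb x Hxl B4) as P3.
  assert (E : F x q - F x0 A = (r * (x - x0) * q + L0 * (q - A)) + kk * (powp q aa - powp A aa)
              + (lam * (wbar x - wbar x0) - (lam + rho) * (w x - w x0))).
  { unfold F, L0. ring. }
  rewrite E.
  assert (T1 : Rabs (r * (x - x0) * q + L0 * (q - A)) <= eps / 3).
  { eapply Rle_trans. apply Rabs_triang. rewrite !Rabs_mult.
    assert (Rabs q <= Rabs A + 1).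
    { replace q with (A + (q - A)) by ring. eapply Rle_trans. apply Rabs_triang. lra. }
    pose proof (Rabs_pos r). pose proof (Rabs_pos (x - x0)). pose proof (Rabs_pos q).
    pose proof (Rabs_pos L0). pose proof (Rabs_pos (q - A)).
    assert (Rabs r * Rabs (x - x0) * Rabs q <= Rabs r * c0 * (Rabs A + 1)).
    { apply Rmult_le_compat; try nra; apply Rmult_le_compat_l; lra. }
    assert (Rabs L0 * Rabs (q - A) <= Rabs L0 * c0) by (apply Rmult_le_compat_l; lra).
    rewrite <- Hc0'. unfold K3. nra. }
  assert (T2 : Rabs (kk * (powp q aa - powp A aa)) <= eps / 3).
  { rewrite Rabs_mult. pose proof (Rabs_pos kk). pose proof (Rabs_pos (powp q aa - powp A aa)). nra. }
  assert (T3 : Rabs (lam * (wbar x - wbar x0) - (lam + rho) * (w x - w x0)) < eps / 3).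
  { unfold Rminus at 1. eapply Rle_lt_trans. apply Rabs_triang. rewrite Rabs_Ropp, !Rabs_mult.
    pose proof (Rabs_triang lam rho). pose proof (Rabs_pos lam). pose proof (Rabs_pos rho).
    pose proof (Rabs_pos (wbar x - wbar x0)). pose proof (Rabs_pos (w x - w x0)). pose proof (Rabs_pos (lam + rho)).
    assert (Rabs lam * Rabs (wbar x - wbar x0) <= Rabs lam * e2) by (apply Rmult_le_compat_l; lra).
    assert (Rabs (lam + rho) * Rabs (w x - w x0) <= (Rabs lam + Rabs rho) * e2) by (apply Rmult_le_compat; lra).
    nra. }
  eapply Rle_lt_trans. apply Rabs_triang. eapply Rle_lt_trans. apply Rplus_le_compat_r. apply Rabs_triang. lra.
Qed.

Lemma limit_F x0 A : xl <= x0 ->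
  (forall c, 0 < c -> exists x1 q1, xl <= x1 /\ Rabs (x1 - x0) < c /\ Rabs (q1 - A) < c /\ 0 <= q1 /\ F x1 q1 <= 0) ->
  0 <= A /\ F x0 A <= 0.
Proof.
  intros Hx H.
  assert (HA : 0 <= A).
  { apply Rnot_lt_le. intros HA. destruct (H (- A) ltac:(lra)) as [x1 [q1 [_ [_ [Hq [Hq0 _]]]]]].
    apply Rabs_def2 in Hq. lra. }
  split; auto. apply Rnot_lt_le. intros HF.
  destruct (cont_F x0 A Hx HA (F x0 A) HF) as [c [Hc Hc']].
  destruct (H c Hc) as [x1 [q1 [Hx1 [Hxc [Hqc [Hq0 HF1]]]]]].
  pose proof (Hc' x1 q1 Hx1 Hxc Hq0 Hqc) as T. apply Rabs_def2 in T. lra.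
Qed.

Lemma kink x0 : xl < x0 -> Ap w x0 = Bm xl w x0 /\ 0 <= Ap w x0.
Proof.
  intros Hx.
  set (A := Ap w x0). set (B := Bm xl w x0).
  assert (HM : forall s, 0 < s -> sl w x0 (x0 + s) <= sl w xl x0) by (intros; apply right_slope_bound; auto).
  destruct (Ap_props xl w Hconc x0 _ ltac:(lra) HM) as [A1 A2].
  destruct (Bm_props xl w Hconc x0 Hx) as [B1 [B2 HAB]].
  destruct (limit_F x0 A ltac:(lra)) as [HA0 HFA].
  { intros c Hc. destruct (right_touch x0 _ ltac:(lra) HM c c Hc Hc) as [x1 [q1 [Hx1 [Hq [Hq0 HF]]]]].
    exists x1, q1. repeat split; auto; try lra. apply Rabs_def1; lra. }
  destruct (limit_F x0 B ltac:(lra)) as [HB0 HFB].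
  { intros c Hc. destruct (left_touch x0 Hx c c Hc Hc) as [x1 [q1 [Hx1 [Hx1' [Hq [Hq0 HF]]]]]].
    exists x1, q1. repeat split; auto; try lra. apply Rabs_def1; lra. }
  split; auto. fold A B in HAB.
  destruct (Rle_lt_or_eq_dec A B HAB) as [Hlt|]; auto. exfalso.
  set (p := (A + B) / 2).
  assert (Hl : loc_max_rel xl w (quad (w x0 - p * x0) p 0) x0).
  { exists 1. split; [lra|]. intros x Hxl _. unfold quad.
    assert (w x - w x0 <= p * (x - x0)); [|nra].
    destruct (Rtotal_order x x0) as [Hlt2|[->|Hgt]].
    - pose proof (B1 (x0 - x) ltac:(lra) ltac:(lra)) as H0.
      replace (x0 - (x0 - x)) with x in H0 by ring.
      pose proof (sl_ge_mul x x0 B Hlt2 H0) as H. unfold p. nra.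
    - lra.
    - pose proof (sl_le_mul x0 x A Hgt ltac:(replace x with (x0 + (x - x0)) by ring; apply A1; lra)) as H.
      unfold p. nra. }
  pose proof (sub_apply x0 _ p 0 ltac:(lra) Hl ltac:(unfold p; lra)) as Hsp.
  replace (p + 2 * 0 * x0) with p in Hsp by ring.
  pose proof (powp_strict A B aa HA0 Hlt aa_bounds) as Hs. pose proof kk_neg.
  unfold F in HFA, HFB, Hsp. fold p in Hs. unfold p in Hsp, Hs. nra.
Qed.

Lemma deriv_interior x0 : xl < x0 -> is_derive w x0 (Ap w x0).
Proof.
  intros Hx. destruct (kink x0 Hx) as [EAB _].
  assert (HM : forall s, 0 < s -> sl w x0 (x0 + s) <= sl w xl x0) by (intros; apply right_slope_bound; auto).
  destruct (Ap_props xl w Hconc x0 _ ltac:(lra) HM) as [A1 A2].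
  destruct (Bm_props xl w Hconc x0 Hx) as [B1 [B2 _]].
  apply is_derive_Reals. intros eps Heps.
  destruct (A2 eps Heps) as [d1 [Hd1 H1]]. destruct (B2 eps Heps) as [d2 [Hd2 [Hd2' H2]]].
  exists (mkposreal (Rmin d1 d2) ltac:(unfold Rmin; destruct Rle_dec; lra)).
  intros h Hh Hhd. simpl in Hhd.
  assert (Hh1 : Rabs h < d1 /\ Rabs h < d2) by (unfold Rmin in Hhd; destruct Rle_dec; split; lra).
  destruct Hh1 as [Hh1 Hh2].
  destruct (Rtotal_order h 0) as [Hn|[Hz|Hp]]; [|contradiction|].
  - rewrite Rabs_left in Hh1, Hh2 by lra.
    pose proof (H2 (- h) ltac:(lra)) as U. pose proof (B1 (- h) ltac:(lra) ltac:(lra)) as V.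
    unfold sl in U, V. replace (x0 - - h) with (x0 + h) in U, V by ring.
    replace (x0 - (x0 + h)) with (- h) in U, V by ring.
    replace ((w x0 - w (x0 + h)) / - h) with ((w (x0 + h) - w x0) / h) in U, V by (field; lra).
    rewrite <- EAB in U, V. apply Rabs_def1; lra.
  - rewrite Rabs_right in Hh1, Hh2 by lra.
    pose proof (H1 h ltac:(lra)) as U. pose proof (A1 h ltac:(lra)) as V.
    unfold sl in U, V. replace (x0 + h - x0) with h in U, V by ring.
    apply Rabs_def1; lra.
Qed.


Hypothesis Hpos : 0 < r * xl + y.

Lemma sl_of_gt_mul a b M : a < b -> M * (b - a) < w b - w a -> M < sl w a b.
Proof.
  intros Hab H. unfold sl. apply Rmult_lt_reg_r with (b - a); [lra|].
  unfold Rdiv. rewrite Rmult_assoc, Rinv_l by lra. lra.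
Qed.

Lemma sl_of_lt_mul a b M : a < b -> w b - w a < M * (b - a) -> sl w a b < M.
Proof.
  intros Hab H. unfold sl. apply Rmult_lt_reg_r with (b - a); [lra|].
  unfold Rdiv. rewrite Rmult_assoc, Rinv_l by lra. lra.
Qed.

Lemma near_bound : exists h0 M0, 0 < h0 /\ forall x0, xl < x0 < xl + h0 -> Ap w x0 <= M0.
Proof.
  pose proof aa_bounds as Haa. pose proof kk_neg as Hkk.
  set (m0 := (r * xl + y) / 2).
  destruct (Hcw xl ltac:(lra) 1 ltac:(lra)) as [dw [Hdw Hw]].
  destruct (Hcwb xl ltac:(lra) 1 ltac:(lra)) as [dwb [Hdwb Hwb]].
  set (Ww := Rabs (w xl) + 1). set (Wb := Rabs (wbar xl) + 1).
  set (C := Rabs lam * (Wb + Ww) + Rabs rho * Ww).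
  destruct (bound_q m0 (- kk) C aa ltac:(unfold m0; lra) ltac:(lra) Haa) as [Qb HQb].
  set (h1 := m0 / (Rabs r + 1)).
  assert (Hh1 : 0 < h1) by (unfold h1, m0; apply Rdiv_lt_0_compat; [lra|]; pose proof (Rabs_pos r); lra).
  assert (Hh1' : (Rabs r + 1) * h1 = m0) by (unfold h1; field; pose proof (Rabs_pos r); lra).
  set (h0 := Rmin (Rmin dw dwb) h1 / 2).
  assert (Hh0 : 0 < h0 /\ 2 * h0 <= dw /\ 2 * h0 <= dwb /\ 2 * h0 <= h1).
  { unfold h0, Rmin; repeat destruct Rle_dec; lra. }
  exists h0, (Qb + 1). split; [lra|]. intros x0 Hx0.
  assert (HM : forall s, 0 < s -> sl w x0 (x0 + s) <= sl w xl x0) by (intros; apply right_slope_bound; auto; lra).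
  destruct (right_touch x0 _ ltac:(lra) HM 1 h0 ltac:(lra) ltac:(lra)) as [x1 [q1 [Hx1 [Hq [Hq0 HF]]]]].
  apply Rabs_def2 in Hq.
  assert (Hq1 : q1 <= Qb); [|lra].
  apply HQb; auto.
  assert (Hxd : Rabs (x1 - xl) < 2 * h0) by (rewrite Rabs_right; lra).
  pose proof (Hw x1 ltac:(lra) ltac:(lra)) as W1. pose proof (Hwb x1 ltac:(lra) ltac:(lra)) as W2.
  assert (Hwx : Rabs (w x1) <= Ww).
  { unfold Ww. replace (w x1) with (w xl + (w x1 - w xl)) by ring. eapply Rle_trans. apply Rabs_triang. lra. }
  assert (Hwbx : Rabs (wbar x1) <= Wb).
  { unfold Wb. replace (wbar x1) with (wbar xl + (wbar x1 - wbar xl)) by ring. eapply Rle_trans. apply Rabs_triang. lra. }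
  assert (HCb : Rabs (lam * (wbar x1 - w x1) - rho * w x1) <= C).
  { unfold Rminus at 1. eapply Rle_trans. apply Rabs_triang. rewrite Rabs_Ropp, !Rabs_mult.
    assert (Rabs (wbar x1 - w x1) <= Wb + Ww).
    { unfold Rminus. eapply Rle_trans. apply Rabs_triang. rewrite Rabs_Ropp. lra. }
    pose proof (Rabs_pos lam). pose proof (Rabs_pos rho). pose proof (Rabs_pos (w x1)).
    pose proof (Rabs_pos (wbar x1 - w x1)).
    unfold C. apply Rplus_le_compat; apply Rmult_le_compat_l; lra. }
  apply Rabs_le_inv in HCb.
  assert (Hrx : m0 <= r * x1 + y).
  { assert (Rabs (r * (x1 - xl)) <= m0).
    { rewrite Rabs_mult. pose proof (Rabs_pos r). rewrite (Rabs_right (x1 - xl)) by lra. nra. }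
    apply Rabs_le_inv in H. unfold m0 in *. nra. }
  unfold F in HF. nra.
Qed.

Lemma xl_bound : exists M0, forall s, 0 < s -> sl w xl (xl + s) <= M0.
Proof.
  destruct near_bound as [h0 [M0 [Hh0 HB]]].
  assert (Hsmall : forall s, 0 < s < h0 -> sl w xl (xl + s) <= M0).
  { intros s Hs. apply Rnot_lt_le. intros Hgt.
    pose proof (sl_gt_mul xl (xl + s) M0 ltac:(lra) Hgt) as G.
    set (gap := w (xl + s) - w xl - M0 * (xl + s - xl)).
    assert (Hgap : 0 < gap) by (unfold gap; lra).
    destruct (Hcw xl ltac:(lra) (gap / 2) ltac:(lra)) as [d [Hd Hwd]].
    set (t := xl + Rmin (Rmin d s) (gap / (4 * (Rabs M0 + 1))) / 2).
    assert (Hg4 : 0 < gap / (4 * (Rabs M0 + 1))) by (apply Rdiv_lt_0_compat; [lra|]; pose proof (Rabs_pos M0); lra).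
    assert (Ht : xl < t /\ t - xl < d /\ t < xl + s /\ t - xl <= gap / (4 * (Rabs M0 + 1))).
    { unfold t, Rmin; repeat destruct Rle_dec; lra. }
    assert (HM0 : Rabs M0 * (t - xl) < gap / 2).
    { assert ((Rabs M0 + 1) * (t - xl) <= gap / 4).
      { replace (gap / 4) with ((Rabs M0 + 1) * (gap / (4 * (Rabs M0 + 1)))) by (field; pose proof (Rabs_pos M0); lra).
        apply Rmult_le_compat_l; [pose proof (Rabs_pos M0); lra | lra]. }
      lra. }
    pose proof (Hwd t ltac:(lra) ltac:(rewrite Rabs_right; lra)) as Wt. apply Rabs_def2 in Wt.
    assert (HMt : forall s', 0 < s' -> sl w t (t + s') <= sl w xl t) by (intros; apply right_slope_bound; auto; lra).
    destruct (Ap_props xl w Hconc t _ ltac:(lra) HMt) as [A1 _].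
    pose proof (A1 (xl + s - t) ltac:(lra)) as H1. replace (t + (xl + s - t)) with (xl + s) in H1 by ring.
    pose proof (HB t ltac:(lra)) as H2.
    pose proof (sl_le_mul t (xl + s) M0 ltac:(lra) ltac:(lra)) as H3.
    pose proof (Rle_abs (- M0)). rewrite Rabs_Ropp in H.
    unfold gap in *. nra. }
  exists M0. intros s Hs. destruct (Rlt_dec s h0) as [Hlt|Hge].
  - apply Hsmall; lra.
  - eapply Rle_trans. eapply slope_ab_ac with (b := xl + h0 / 2); eauto; lra.
    apply Hsmall; lra.
Qed.

Lemma right_bound x0 : xl <= x0 -> exists M, forall s, 0 < s -> sl w x0 (x0 + s) <= M.
Proof.
  intros Hx. destruct (Rle_lt_or_eq_dec xl x0 Hx) as [Hlt|<-].
  - exists (sl w xl x0). intros; apply right_slope_bound; auto.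
  - apply xl_bound.
Qed.

Lemma Ap_full x0 : xl <= x0 ->
  (forall s, 0 < s -> sl w x0 (x0 + s) <= Ap w x0) /\
  (forall eta, 0 < eta -> exists d0, 0 < d0 /\ forall s, 0 < s <= d0 -> Ap w x0 - eta < sl w x0 (x0 + s)).
Proof.
  intros Hx. destruct (right_bound x0 Hx) as [M HM]. eapply Ap_props; eauto.
Qed.

Lemma Ap_mono x0 z : xl <= x0 -> x0 < z -> Ap w z <= Ap w x0.
Proof.
  intros Hx Hz. destruct (kink z ltac:(lra)) as [E _].
  destruct (Bm_props xl w Hconc z ltac:(lra)) as [B1 _].
  destruct (Ap_full x0 Hx) as [A1 _].
  pose proof (B1 (z - x0) ltac:(lra) ltac:(lra)) as H1. replace (z - (z - x0)) with x0 in H1 by ring.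
  pose proof (A1 (z - x0) ltac:(lra)) as H2. replace (x0 + (z - x0)) with z in H2 by ring.
  lra.
Qed.

Lemma right_cont x0 : xl <= x0 -> forall eps, 0 < eps -> exists d, 0 < d /\
  forall z, x0 <= z < x0 + d -> Rabs (Ap w z - Ap w x0) < eps.
Proof.
  intros Hx eps He.
  destruct (Ap_full x0 Hx) as [A1 A2].
  destruct (A2 (eps / 2) ltac:(lra)) as [d0 [Hd0 H0]].
  set (s := Rmin d0 1). assert (Hs : 0 < s /\ s <= d0) by (unfold s, Rmin; destruct Rle_dec; lra).
  pose proof (sl_gt_mul x0 (x0 + s) _ ltac:(lra) (H0 s ltac:(lra))) as G.
  replace (x0 + s - x0) with s in G by ring.
  set (A0 := Ap w x0) in *.
  destruct (Hcw x0 Hx (eps * s / 4) ltac:(nra)) as [dw [Hdw Hw]].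
  set (K := Rabs (A0 - eps) + 1).
  assert (HK : 0 < K) by (unfold K; pose proof (Rabs_pos (A0 - eps)); lra).
  exists (Rmin (Rmin dw (s / 2)) (eps * s / (4 * K))). split.
  { assert (0 < eps * s / (4 * K)) by (apply Rdiv_lt_0_compat; nra). unfold Rmin; repeat destruct Rle_dec; lra. }
  intros z Hz.
  assert (Hz' : z - x0 < dw /\ z - x0 < s / 2 /\ z - x0 < eps * s / (4 * K)).
  { destruct Hz as [_ Hz]. revert Hz. unfold Rmin; repeat destruct Rle_dec; intros; repeat split; lra. }
  destruct Hz' as [Z1 [Z2 Z3]].
  destruct (Req_dec z x0) as [->|Hne]. { unfold A0. rewrite Rminus_diag, Rabs_R0. lra. }
  assert (Hzx : x0 < z) by lra.
  pose proof (Ap_mono x0 z Hx Hzx) as M1. fold A0 in M1.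
  destruct (Ap_full z ltac:(lra)) as [Z A_].
  pose proof (Z (x0 + s - z) ltac:(lra)) as H1. replace (z + (x0 + s - z)) with (x0 + s) in H1 by ring.
  assert (Hlow : A0 - eps < sl w z (x0 + s)).
  { apply sl_of_gt_mul; [lra|].
    pose proof (Hw z ltac:(lra) ltac:(rewrite Rabs_right; lra)) as W. apply Rabs_def2 in W.
    assert (K * (z - x0) < eps * s / 4).
    { apply Rmult_lt_reg_r with (/ K). apply Rinv_0_lt_compat; lra.
      replace (K * (z - x0) * / K) with (z - x0) by (field; lra).
      replace (eps * s / 4 * / K) with (eps * s / (4 * K)) by (field; lra). lra. }
    pose proof (Rle_abs (A0 - eps)). pose proof (Rle_abs (- (A0 - eps))) as HR. rewrite Rabs_Ropp in HR.
    unfold K in H. nra. }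
  apply Rabs_def1; lra.
Qed.

Lemma left_cont x0 : xl < x0 -> forall eps, 0 < eps -> exists d, 0 < d /\ d < x0 - xl /\
  forall z, x0 - d < z <= x0 -> Rabs (Ap w z - Ap w x0) < eps.
Proof.
  intros Hx eps He.
  destruct (kink x0 Hx) as [E0 _].
  destruct (Bm_props xl w Hconc x0 Hx) as [_ [B2 _]].
  destruct (B2 (eps / 2) ltac:(lra)) as [s [Hs [Hs' H0]]].
  pose proof (sl_lt_mul (x0 - s) x0 _ ltac:(lra) (H0 s ltac:(lra))) as G.
  replace (x0 - (x0 - s)) with s in G by ring.
  rewrite <- E0 in G.
  set (A0 := Ap w x0) in *.
  destruct (Hcw x0 ltac:(lra) (eps * s / 4) ltac:(nra)) as [dw [Hdw Hw]].
  set (K := Rabs (A0 + eps) + 1).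
  assert (HK : 0 < K) by (unfold K; pose proof (Rabs_pos (A0 + eps)); lra).
  exists (Rmin (Rmin dw (s / 2)) (eps * s / (4 * K))). split; [|split].
  { assert (0 < eps * s / (4 * K)) by (apply Rdiv_lt_0_compat; nra). unfold Rmin; repeat destruct Rle_dec; lra. }
  { unfold Rmin; repeat destruct Rle_dec; lra. }
  intros z Hz.
  assert (Hz' : x0 - z < dw /\ x0 - z < s / 2 /\ x0 - z < eps * s / (4 * K)).
  { destruct Hz as [Hz _]. revert Hz. unfold Rmin; repeat destruct Rle_dec; intros; repeat split; lra. }
  destruct Hz' as [Z1 [Z2 Z3]].
  destruct (Req_dec z x0) as [->|Hne]. { unfold A0. rewrite Rminus_diag, Rabs_R0. lra. }
  assert (Hzx : z < x0) by lra.
  pose proof (Ap_mono z x0 ltac:(lra) Hzx) as M1. fold A0 in M1.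
  destruct (kink z ltac:(lra)) as [Ez _].
  destruct (Bm_props xl w Hconc z ltac:(lra)) as [Bz _].
  pose proof (Bz (z - (x0 - s)) ltac:(lra) ltac:(lra)) as H1. replace (z - (z - (x0 - s))) with (x0 - s) in H1 by ring.
  rewrite <- Ez in H1.
  assert (Hup : sl w (x0 - s) z < A0 + eps).
  { apply sl_of_lt_mul; [lra|].
    pose proof (Hw z ltac:(lra) ltac:(rewrite Rabs_left; lra)) as W. apply Rabs_def2 in W.
    assert (K * (x0 - z) < eps * s / 4).
    { apply Rmult_lt_reg_r with (/ K). apply Rinv_0_lt_compat; lra.
      replace (K * (x0 - z) * / K) with (x0 - z) by (field; lra).
      replace (eps * s / 4 * / K) with (eps * s / (4 * K)) by (field; lra). lra. }
    pose proof (Rle_abs (A0 + eps)).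
    unfold K in H. nra. }
  apply Rabs_def1; lra.
Qed.

End PDE.

Lemma component (rho r gamma xl y lam : R) (w wbar : R -> R) :
  1 < gamma -> cont_on xl w -> cont_on xl wbar -> concave_on xl w ->
  visc_super_j rho r gamma xl y lam (fun x => xl < x) w wbar ->
  visc_sub_j rho r gamma xl y lam (fun x => xl <= x) w wbar ->
  0 < r * xl + y -> C1_conclusion xl w.
Proof.
  intros Hg Hcw Hcwb Hconc Hsup Hsub Hpos.
  assert (RC : forall x0, xl <= x0 -> forall eps, 0 < eps -> exists d, 0 < d /\
      forall z, x0 <= z < x0 + d -> Rabs (Ap w z - Ap w x0) < eps) by (intros; eapply right_cont; eauto).
  assert (LC : forall x0, xl < x0 -> forall eps, 0 < eps -> exists d, 0 < d /\ d < x0 - xl /\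
      forall z, x0 - d < z <= x0 -> Rabs (Ap w z - Ap w x0) < eps) by (intros; eapply left_cont; eauto).
  assert (AF : forall x0, xl <= x0 ->
    (forall s, 0 < s -> sl w x0 (x0 + s) <= Ap w x0) /\
    (forall eta, 0 < eta -> exists d0, 0 < d0 /\ forall s, 0 < s <= d0 -> Ap w x0 - eta < sl w x0 (x0 + s)))
    by (intros; eapply Ap_full; eauto).
  assert (Hpt : forall x, xl <= x -> forall eps, 0 < eps -> exists d, 0 < d /\
            forall z, Rabs (z - x) < d -> Rabs (Ap w (Rmax z xl) - Ap w (Rmax x xl)) < eps).
  { intros x Hx eps He. rewrite (Rmax_left x xl) by lra.
    destruct (RC x Hx eps He) as [d1 [Hd1 H1]].
    destruct (Rle_lt_or_eq_dec xl x Hx) as [Hlt|<-].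
    - destruct (LC x Hlt eps He) as [d2 [Hd2 [Hd2' H2]]].
      exists (Rmin d1 d2). split. unfold Rmin; destruct Rle_dec; lra.
      intros z Hz. assert (Hz' : Rabs (z - x) < d1 /\ Rabs (z - x) < d2) by (unfold Rmin in Hz; destruct Rle_dec; split; lra).
      destruct Hz' as [Z1 Z2]. apply Rabs_def2 in Z1. apply Rabs_def2 in Z2.
      rewrite Rmax_left by lra.
      destruct (Rle_dec x z). apply H1; lra. apply H2; lra.
    - exists d1. split; auto. intros z Hz. apply Rabs_def2 in Hz.
      destruct (Rle_dec xl z).
      + rewrite Rmax_left by lra. apply H1; lra.
      + rewrite Rmax_right by lra. rewrite Rminus_diag, Rabs_R0. lra. }
  exists (Ap w). split; [|split; [|split]].
  - intros x Hx. eapply deriv_interior; eauto.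
  - intros x Hx. apply continuity_pt_filterlim. apply cont_pt_of_eps. intros eps He.
    destruct (Hpt x ltac:(lra) eps He) as [d [Hd H]].
    destruct (Rle_dec x (xl + (x - xl))) as [_|]; [|lra].
    exists (Rmin d (x - xl)). split. unfold Rmin; destruct Rle_dec; lra.
    intros z Hz. assert (Hz' : Rabs (z - x) < d /\ Rabs (z - x) < x - xl) by (unfold Rmin in Hz; destruct Rle_dec; split; lra).
    destruct Hz' as [Z1 Z2]. pose proof (H z Z1) as HH. apply Rabs_def2 in Z2.
    rewrite !Rmax_left in HH by lra. exact HH.
  - apply filterlim_locally. intros eps.
    destruct (AF xl ltac:(lra)) as [A1 A2].
    destruct (A2 eps (cond_pos eps)) as [d0 [Hd0 H]].
    exists (mkposreal d0 Hd0). intros e He Hpos'. change R in e.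
    assert (He' : Rabs (e - 0) < d0) by exact He. rewrite Rminus_0_r in He'.
    rewrite Rabs_right in He' by lra.
    pose proof (H e ltac:(lra)) as U. pose proof (A1 e Hpos') as V.
    unfold sl in U, V. replace (xl + e - xl) with e in U, V by ring.
    change (Rabs ((w (xl + e) - w xl) / e - Ap w xl) < eps).
    apply Rabs_def1; lra.
  - intros Rb HRb eps He.
    assert (Hu := Heine (fun x => Ap w (Rmax x xl)) (fun c => xl <= c <= Rb) (compact_P3 xl Rb)).
    destruct Hu with (eps := mkposreal eps He) as [delta Hdelta].
    { intros x Hx. apply cont_pt_of_eps. apply Hpt. lra. }
    exists delta. split. apply cond_pos. intros a b Ha Hb Hab.
    pose proof (Hdelta a b Ha Hb Hab) as HH. simpl in HH.
    rewrite !Rmax_left in HH by lra. exact HH.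
Qed.

Theorem mainTheorem8
  (rho r gamma y1 y2 xl lam1 lam2 : R) (v1 v2 : R -> R)
  (Hrho : 0 < rho) (Hr : r < rho) (Hy1 : 0 < y1) (Hy12 : y1 < y2)
  (Hgamma : 1 < gamma) (Hxl : xl <= 0)
  (Hxy1 : 0 < rho * xl + y1) (Hxy2 : 0 < rho * xl + y2)
  (Hlam1 : 0 <= lam1) (Hlam2 : 0 <= lam2)
  (Hsol : constrained_visc_sol rho r gamma xl y1 y2 lam1 lam2 v1 v2)
  (Hb1 : bounded_on xl v1) (Hb2 : bounded_on xl v2)
  (Hc1 : concave_on xl v1) (Hc2 : concave_on xl v2) :
  C1_conclusion xl v1 /\ C1_conclusion xl v2.
Proof.
  destruct Hsol as [Hcv1 [Hcv2 [[_ [_ [Hsup1 Hsup2]]] [_ [_ [Hsub1 Hsub2]]]]]].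
  assert (Hrx : rho * xl <= r * xl) by nra.
  split.
  - eapply component with (wbar := v2); eauto. lra.
  - eapply component with (wbar := v1); eauto. lra.
Qed.
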